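(* Let $n\ge1$ and $k\ge1$ be integers. Then $$|\mathrm{SVT}((k),n)|=\binom{n+k-1}{k}\,{}_2F_1\!\left(\begin{matrix}k,\;1-n\\ k+1\end{matrix};-1\right).$$
   Context: Let $[n]=\{1,\dots,n\}$. For a partition $\lambda$ with at most $n$ nonzero parts, identified with its Young diagram $\{(i,j): 1\le j\le\lambda_i\}$ (row index $i$ increasing downward, column index $j$ to the right), a set-valued tableau of shape $\lambda$ with entries in $[n]$ assigns to every box $(i,j)$ a nonempty subset $T_{i,j}\subseteq[n]$ such that $\max T_{i,j}\le\min T_{i,j+1}$ and $\max T_{i,j}<\min T_{i+1,j}$ whenever these boxes exist; $\mathrm{SVT}(\lambda,n)$ is the set of these tableaux, and $(k)$ is the one-row partition with $k$ boxes. $(a)_0=1$, $(a)_m=a(a+1)\cdots(a+m-1)$, and ${}_2F_1\!\left(\begin{smallmatrix}a,\,b\\ c\end{smallmatrix};z\right)=\sum_{m\ge0}\frac{(a)_m(b)_m}{(c)_m}\frac{z^m}{m!}$, a finite sum when $b$ is a nonpositive integer. *)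

(* Defs.v *)
From mathcomp Require Import all_boot all_order all_algebra.
Set Implicit Arguments. Unset Strict Implicit. Unset Printing Implicit Defensive.
Import GRing.Theory Num.Theory.

Definition is_partition (lam : seq nat) : bool :=
  sorted geq lam && all (fun p => 0 < p) lam.

(* Boxes are 0-indexed: (i, j) with i < size lam and j < lam_i. *)
Definition in_diagram (lam : seq nat) (i j : nat) : bool :=
  (i < size lam) && (j < nth 0 lam i).

(* Entries in [n] = {1..n} are encoded by 'I_n (value v stands for v+1);
   this shift is order-preserving, so the tableau conditions are unchanged.
   A set-valued tableau of shape lam is stored as a finite function on the
   bounding rectangle 'I_(size lam) x 'I_(lam_1); boxes outside the diagram
   are required to carry the empty set, so these functions are in bijection
   with set-valued tableaux. *)
Definition svt_box_type (lam : seq nat) := ('I_(size lam) * 'I_(head 0 lam))%type.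

Definition is_svt (lam : seq nat) (n : nat)
    (T : {ffun svt_box_type lam -> {set 'I_n}}) : bool :=
  [forall b : svt_box_type lam,
     let i := val b.1 in let j := val b.2 in
     if in_diagram lam i j then
       [&& T b != set0,
           [forall b' : svt_box_type lam,
              ((val b'.1 == i) && (val b'.2 == j.+1)) ==>
              [forall x in T b, forall y in T b', (val x <= val y)%N]] &
           [forall b' : svt_box_type lam,
              ((val b'.1 == i.+1) && (val b'.2 == j) && in_diagram lam i.+1 j) ==>
              [forall x in T b, forall y in T b', (val x < val y)%N]]]
     else T b == set0].

Definition SVT (lam : seq nat) (n : nat) : {set {ffun svt_box_type lam -> {set 'I_n}}} :=
  [set T | is_svt T].

Definition pochhammer {R : ringType} (a : R) (m : nat) : R :=
  \prod_(i < m) (a + i%:R).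

Definition hyp2F1_term {R : fieldType} (a b c z : R) (m : nat) : R :=
  pochhammer a m * pochhammer b m / pochhammer c m * (z ^+ m / (m`!)%:R).

(* Terminating Gauss hypergeometric series for b = -N (N : nat):
   all terms with m > N vanish since (b)_m = 0, so the series is
   the finite sum over m = 0..N. *)
Definition hyp2F1_terminating {R : fieldType} (a : R) (N : nat) (c z : R) : R :=
  \sum_(m < N.+1) hyp2F1_term a (- (N%:R)) c z m.

(* Main.v *)
Require Import Defs.
From mathcomp Require Import all_boot all_order all_algebra.
Import GRing.Theory Num.Theory.
From mathcomp Require Import zify ring.
Set Implicit Arguments. Unset Strict Implicit.

Lemma binL n k j : 'C(n+k,k) * 'C(n,j) = 'C(n+k,k+j) * 'C(k+j,j).
Proof.
have [jn|nj] := leqP j n; last first.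
  by rewrite (bin_small nj) (@bin_small (n+k) (k+j)) ?muln0 ?mul0n //; lia.
have F : 0 < k`! * j`! * (n-j)`! by rewrite !muln_gt0 !fact_gt0.
apply/eqP; rewrite -(eqn_pmul2r F); apply/eqP.
have h1 := bin_fact jn.
have h2 : k <= n + k by lia.
have h2' := bin_fact h2. rewrite (_ : n + k - k = n) in h2'; last by lia.
have h3 : j <= k + j by lia.
have h3' := bin_fact h3. rewrite (_ : k + j - j = k) in h3'; last by lia.
have h4 : k + j <= n + k by lia.
have h4' := bin_fact h4. rewrite (_ : n + k - (k+j) = n - j) in h4'; last by lia.
transitivity ('C(n + k, k) * (k`! * ('C(n, j) * (j`! * (n - j)`!)))); first by ring.
rewrite h1 h2'.
transitivity ('C(n + k, k + j) * (('C(k + j, j) * (j`! * k`!)) * (n - j)`!)); last by ring.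
by rewrite h3' h4'.
Qed.
Definition Tsum m l := \sum_(i < m) 2^i * 'C(i+l,l).
Definition Usum m l := \sum_(j < m) 'C(m+l, l+1+j) * 'C(l+j,j).

Lemma sum_bin m : \sum_(j < m.+1) 'C(m, j) = 2 ^ m.
Proof.
have := expnDn 1 1 m; rewrite add1n => ->.
by apply: eq_bigr => i _; rewrite !exp1n !muln1.
Qed.

Lemma TU m l : Tsum m l = Usum m l.
Proof.
elim: m => [|m IH]; first by rewrite /Tsum /Usum !big_ord0.
rewrite /Tsum big_ord_recr /= -/(Tsum m l) IH /Usum.
have -> : \sum_(j < m.+1) 'C(m.+1 + l, l + 1 + j) * 'C(l + j, j)
  = \sum_(j < m.+1) 'C(m + l, (l + j).+1) * 'C(l + j, j)
    + \sum_(j < m.+1) 'C(m + l, l + j) * 'C(l + j, j).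
  rewrite -big_split /=; apply: eq_bigr => j _.
  by rewrite addSn (_ : l + 1 + j = (l+j).+1) ?binS ?mulnDl //; lia.
rewrite [X in _ = X + _]big_ord_recr /= (@bin_small _ (l+m).+1); last by lia.
rewrite mul0n addn0; congr (_ + _).
  apply: eq_big => // j _; congr ('C(_,_) * _); lia.
symmetry.
transitivity (\sum_(j < m.+1) 'C(m + l, l) * 'C(m, j)).
  by apply: eq_bigr => j _; rewrite binL.
by rewrite -big_distrr /= sum_bin mulnC.
Qed.

Lemma Trec m l : Tsum m.+1 l.+1 = 2 * Tsum m l.+1 + Tsum m.+1 l.
Proof.
rewrite /Tsum big_ord_recl /= expn0 mul1n add0n binn.
have -> : \sum_(i < m) 2 ^ (bump 0 i) * 'C(bump 0 i + l.+1, l.+1)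
   = \sum_(i < m) 2 * (2 ^ i * 'C(i + l.+1, l.+1)) + \sum_(i < m) 2 ^ (bump 0 i) * 'C(bump 0 i + l, l).
  rewrite -big_split /=; apply: eq_bigr => i _.
  rewrite /bump /= add1n expnS addSn.
  rewrite (_ : (i + l.+1) = (i + l).+1) ?binS; last by lia.
  rewrite (_ : i.+1 + l = (i+l).+1); last by lia.
  ring.
rewrite -big_distrr /= [in RHS]big_ord_recl /= expn0 mul1n add0n binn.
ring.
Qed.

Lemma Tsum0 m : Tsum m 0 + 1 = 2 ^ m.
Proof.
elim: m => [|m IH]; first by rewrite /Tsum big_ord0.
rewrite /Tsum big_ord_recr /= -/(Tsum m 0) addn0 bin0 muln1 expnS.
lia.
Qed.

Lemma Trec0 m : Tsum m.+1 0 = 2 * Tsum m 0 + 1.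
Proof. have := Tsum0 m; have := Tsum0 m.+1; rewrite expnS; lia. Qed.

Section Count.
Variables N K : nat.
Definition FF := {ffun 'I_K -> {set 'I_N}}.

Definition valid (n k : nat) (f : FF) : bool :=
  [&& [forall j : 'I_K, (j < k) == (f j != set0)],
      [forall j : 'I_K, forall x in f j, x < n] &
      [forall j1 : 'I_K, forall j2 : 'I_K, (nat_of_ord j2 == (nat_of_ord j1).+1) ==>
          [forall x in f j1, forall y in f j2, (nat_of_ord x <= nat_of_ord y)%N]]].

Lemma valid_ne n k (f : FF) (j : 'I_K) : valid n k f -> (j < k) = (f j != set0).
Proof. by case/and3P => /forallP/(_ j)/eqP. Qed.

Lemma valid_lt n k (f : FF) (j : 'I_K) (x : 'I_N) : valid n k f -> x \in f j -> x < n.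
Proof. by case/and3P => _ /forallP/(_ j)/forall_inP H _; apply: H. Qed.

Lemma valid_ch n k (f : FF) (j1 j2 : 'I_K) x y : valid n k f -> nat_of_ord j2 = (nat_of_ord j1).+1 ->
  x \in f j1 -> y \in f j2 -> nat_of_ord x <= nat_of_ord y.
Proof.
case/and3P => _ _ /forallP/(_ j1)/forallP/(_ j2)/implyP H e hx hy.
by have /forall_inP/(_ x hx)/forall_inP/(_ y hy) := H (introT eqP e).
Qed.

Lemma validI n k (f : FF) : (forall j : 'I_K, (j < k) = (f j != set0)) ->
  (forall j (x : 'I_N), x \in f j -> x < n) ->
  (forall (j1 j2 : 'I_K) (x y : 'I_N), nat_of_ord j2 = (nat_of_ord j1).+1 -> x \in f j1 -> y \in f j2 -> nat_of_ord x <= nat_of_ord y) ->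
  valid n k f.
Proof.
move=> H1 H2 H3; apply/and3P; split.
- by apply/forallP => j; rewrite H1.
- by apply/forallP => j; apply/forall_inP => x; apply: H2.
- apply/forallP => j1; apply/forallP => j2; apply/implyP => /eqP e.
  apply/forall_inP => x hx; apply/forall_inP => y hy; exact: H3 e hx hy.
Qed.

Lemma valid_mono n k (f : FF) (j1 j2 : 'I_K) (x y : 'I_N) : valid n k f -> (j1 < j2)%N -> (j2 < k)%N ->
  x \in f j1 -> y \in f j2 -> nat_of_ord x <= nat_of_ord y.
Proof.
move=> V lt12 lt2k hx.
have [v ev] : exists v, nat_of_ord j2 = (nat_of_ord j1 + v.+1)%N by exists (j2 - j1.+1)%N; lia.
elim: v j2 ev lt12 lt2k y => [|v IH] j2 ev lt12 lt2k y hy.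
  by apply: (valid_ch V) hx hy; lia.
have hj' : (j2.-1 < K)%N by have := ltn_ord j2; lia.
pose j' := Ordinal hj'.
have : f j' != set0 by rewrite -(valid_ne _ V) /=; lia.
case/set0Pn => z hz.
have h1 : nat_of_ord x <= nat_of_ord z by apply: (IH j') => //=; lia.
have h2 : nat_of_ord z <= nat_of_ord y by apply: (valid_ch V) hz hy => /=; lia.
lia.
Qed.

Definition Cnt n k := #|[set f : FF | valid n k f]|.

Lemma Cnt_k0 n : Cnt n 0 = 1%N.
Proof.
rewrite /Cnt (_ : [set f : FF | valid n 0 f] = [set [ffun=> set0]]) ?cards1 //.
apply/setP => f; rewrite !inE; apply/idP/eqP.
  move=> V; apply/ffunP => j; rewrite ffunE.
  by have := valid_ne j V; rewrite ltn0 => /esym/negbFE/eqP.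
move=> ->; apply: validI => [j|j x|j1 j2 x y _]; rewrite ?ffunE ?inE ?eqxx //.
Qed.

Lemma Cnt_0k k : (0 < k)%N -> (0 < K)%N -> Cnt 0 k = 0%N.
Proof.
move=> k0 K0; apply: eq_card0 => f; rewrite inE; apply/negP => V.
have : f (Ordinal K0) != set0 by rewrite -(valid_ne _ V).
by case/set0Pn => x /(valid_lt V).
Qed.


Section Rec.
Variables (m l : nat) (hm : (m < N)%N) (hl : (l < K)%N).
Let p : 'I_N := Ordinal hm.
Let q : 'I_K := Ordinal hl.

Definition upd (f : FF) (v : {set 'I_N}) : FF := [ffun j => if j == q then v else f j].

Lemma eq_q (j : 'I_K) : (j == q) = (nat_of_ord j == l). Proof. by []. Qed.
Lemma eq_p (x : 'I_N) : (x == p) = (nat_of_ord x == m). Proof. by []. Qed.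
Lemma neq_p (x : 'I_N) : x != p -> nat_of_ord x <> m.
Proof. by move=> /eqP H e; apply: H; apply: val_inj. Qed.

Lemma fq_ne (f : FF) n : valid n l.+1 f -> f q != set0.
Proof. by move=> V; rewrite -(valid_ne _ V) /=. Qed.

Lemma lt_l (f : FF) n (j : 'I_K) (x : 'I_N) : valid n l.+1 f -> x \in f j -> j != q -> (j < l)%N.
Proof.
move=> V hx; rewrite eq_q => jq.
have : (j < l.+1)%N by rewrite (valid_ne _ V); apply/set0Pn; exists x.
lia.
Qed.

Lemma p_notin (f : FF) (j : 'I_K) : valid m.+1 l.+1 f -> j != q -> p \in f j ->
   f q = [set p].
Proof.
move=> V jq pj; have jl := lt_l V pj jq.
apply/eqP; rewrite eqEsubset; apply/andP; split.
  apply/subsetP => y hy; rewrite inE; apply/eqP/val_inj => /=.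
  have := valid_mono (j1:=j) (j2:=q) V jl (ltnSn l) pj hy; have := valid_lt V hy; simpl; lia.
have := valid_mono (j1:=j) (j2:=q) V jl (ltnSn l) pj.
case/set0Pn: (fq_ne V) => y hy Hm.
have := Hm y hy; have := valid_lt V hy => /= h1 h2.
have -> : p = y by apply/val_inj => /=; lia.
by rewrite sub1set.
Qed.

Let V := [set f : FF | valid m.+1 l.+1 f].
Let A := [set f : FF | p \in f q].
Let B := [set f : FF | f q == [set p]].

Lemma E1 : V :\: A = [set f : FF | valid m l.+1 f].
Proof.
apply/setP => f; rewrite !inE; apply/andP/idP.
  case=> npq W; apply: validI.
  - by move=> j; rewrite (valid_ne _ W).
  - move=> j x hx; have := valid_lt W hx; rewrite ltnS leq_eqVlt; case/orP => // /eqP xm.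
    have xp : x = p by apply: val_inj.
    case: (eqVneq j q) => [jq|jq]; first by move: npq; rewrite -xp -jq hx.
    move: (p_notin W jq); rewrite -xp => /(_ hx) fq.
    by move: npq; rewrite fq xp set11.
  - by move=> j1 j2 x y; apply: valid_ch W.
move=> W; split.
  by apply/negP => /(valid_lt W) /=; rewrite ltnn.
apply: validI.
- by move=> j; rewrite (valid_ne _ W).
- by move=> j x hx; have := valid_lt W hx; lia.
- by move=> j1 j2 x y; apply: valid_ch W.
Qed.

Lemma upd_q f v : upd f v q = v. Proof. by rewrite ffunE eqxx. Qed.
Lemma upd_j f v j : j != q -> upd f v j = f j. Proof. by rewrite ffunE => /negbTE ->. Qed.

Lemma E2 : (V :&: A) :&: B = [set upd f [set p] | f in [set f : FF | valid m.+1 l f]].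
Proof.
apply/setP => f; rewrite !inE; apply/idP/imsetP.
  case/andP => /andP [W pq] /eqP fq.
  exists (upd f set0).
    rewrite inE; apply: validI.
    - move=> j; case: (eqVneq j q) => [->|jq]; first by rewrite upd_q eqxx /= ltnn.
      rewrite upd_j // -(valid_ne _ W); move: jq; rewrite eq_q; lia.
    - move=> j x; case: (eqVneq j q) => [->|jq]; first by rewrite upd_q inE.
      by rewrite upd_j // => /(valid_lt W).
    - move=> j1 j2 x y e; case: (eqVneq j1 q) => [->|jq1]; first by rewrite upd_q inE.
      case: (eqVneq j2 q) => [->|jq2]; first by rewrite upd_q inE.
      by rewrite !upd_j //; apply: valid_ch W e.
  apply/ffunP => j; case: (eqVneq j q) => [->|jq]; first by rewrite upd_q.
  by rewrite !upd_j.
case=> g; rewrite inE => W ->; rewrite upd_q set11 eqxx !andbT.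
apply: validI.
- move=> j; case: (eqVneq j q) => [->|jq].
    by rewrite upd_q /= ltnSn; apply/esym/set0Pn; exists p; rewrite set11.
  rewrite upd_j // -(valid_ne _ W); move: jq; rewrite eq_q; lia.
- move=> j x; case: (eqVneq j q) => [->|jq].
    by rewrite upd_q inE => /eqP ->.
  by rewrite upd_j // => /(valid_lt W) /=; lia.
- move=> j1 j2 x y e; case: (eqVneq j1 q) => [e1|jq1].
    case: (eqVneq j2 q) => [e2|jq2]; first by move: e; rewrite e1 e2 /=; lia.
    rewrite (upd_j _ _ jq2) => _ hy.
    have : (j2 < l)%N by rewrite (valid_ne _ W); apply/set0Pn; exists y.
    by move: e; rewrite e1 /=; lia.
  rewrite upd_j //; case: (eqVneq j2 q) => [->|jq2].
    by rewrite upd_q inE => hx /eqP ->; have := valid_lt W hx.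
  by rewrite upd_j //; apply: valid_ch W e.
Qed.

Lemma E3 : (V :&: A) :\: B = [set upd f (p |: f q) | f in [set f : FF | valid m l.+1 f]].
Proof.
apply/setP => f; rewrite !inE; apply/idP/imsetP.
  case/andP => nfq /andP [W pq].
  have hne : f q :\ p != set0.
    apply: contra nfq => /eqP e; apply/eqP.
    by rewrite -(setD1K pq) e setU0.
  exists (upd f (f q :\ p)).
    rewrite inE; apply: validI.
    - move=> j; case: (eqVneq j q) => [->|jq]; first by rewrite upd_q hne /= ltnSn.
      by rewrite upd_j // -(valid_ne _ W).
    - move=> j x; case: (eqVneq j q) => [->|jq].
        rewrite upd_q !inE => /andP [xp hx]; have := valid_lt W hx.
        have := neq_p xp; simpl; lia.
      rewrite upd_j // => hx; have := valid_lt W hx; rewrite ltnS leq_eqVlt.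
      case/orP => // /eqP xm; have xp : x = p by apply: val_inj.
      by move: nfq; rewrite (p_notin W jq) ?eqxx // -xp.
    - move=> j1 j2 x y e hx hy; apply: (valid_ch W e).
        by case: (eqVneq j1 q) hx => [->|jq]; rewrite ?upd_q ?upd_j // inE => /andP [].
      by case: (eqVneq j2 q) hy => [->|jq]; rewrite ?upd_q ?upd_j // inE => /andP [].
  apply/ffunP => j; case: (eqVneq j q) => [->|jq]; last by rewrite !upd_j.
  by rewrite !upd_q setD1K.
case=> g; rewrite inE => W ->; rewrite upd_q setU11 andbT.
case/set0Pn: (fq_ne W) => y hy.
apply/andP; split.
  apply/negP => /eqP e.
  have : y \in p |: g q by rewrite setU1r.
  rewrite e inE eq_p => /eqP ym; have := valid_lt W hy; lia.
apply: validI.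
- move=> j; case: (eqVneq j q) => [->|jq].
    by rewrite upd_q /= ltnSn; apply/esym/set0Pn; exists p; rewrite setU11.
  by rewrite upd_j // -(valid_ne _ W).
- move=> j x; case: (eqVneq j q) => [->|jq].
    rewrite upd_q !inE => /orP [/eqP -> //|hx].
    by have := valid_lt W hx; lia.
  by rewrite upd_j // => /(valid_lt W) /=; lia.
- move=> j1 j2 x y' e; case: (eqVneq j1 q) => [e1|jq1].
    case: (eqVneq j2 q) => [e2|jq2]; first by move: e; rewrite e1 e2 /=; lia.
    rewrite (upd_j _ _ jq2) => _ hy'.
    have : (j2 < l.+1)%N by rewrite (valid_ne _ W); apply/set0Pn; exists y'.
    by move: e; rewrite e1 /=; lia.
  rewrite upd_j //; case: (eqVneq j2 q) => [e2|jq2].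
    rewrite e2 upd_q !inE => hx /orP [/eqP ->|hy'].
      by have := valid_lt W hx => /=; lia.
    by apply: valid_ch W _ hx hy'; rewrite -e2.
  by rewrite upd_j //; apply: valid_ch W e.
Qed.

Lemma Cnt_rec : Cnt m.+1 l.+1 = (2 * Cnt m l.+1 + Cnt m.+1 l)%N.
Proof.
rewrite /Cnt -/V -(cardsID A V) E1 -(cardsID B (V :&: A)) E2 E3.
rewrite !card_in_imset.
- rewrite mul2n -addnn; lia.
- move=> f g; rewrite !inE => Wf Wg e; apply/ffunP => j.
  case: (eqVneq j q) => [->|jq].
    have nf : p \notin f q by apply/negP => /(valid_lt Wf); rewrite /= ltnn.
    have ng : p \notin g q by apply/negP => /(valid_lt Wg); rewrite /= ltnn.
    have := congr1 (fun h : FF => h q) e; rewrite !upd_q => e'.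
    by rewrite -(setU1K nf) e' setU1K.
  by rewrite -(upd_j f (p |: f q) jq) e upd_j.
- move=> f g; rewrite !inE => Wf Wg e; apply/ffunP => j.
  case: (eqVneq j q) => [->|jq].
    have -> : f q = set0 by apply/eqP; apply/negPn; rewrite -(valid_ne _ Wf) /= ltnn.
    have -> : g q = set0 by apply/eqP; apply/negPn; rewrite -(valid_ne _ Wg) /= ltnn.
    by [].
  by rewrite -(upd_j f [set p] jq) e upd_j.
Qed.

End Rec.
End Count.
Section SV.
Variables n k : nat.
Definition phi (T : {ffun svt_box_type [:: k] -> {set 'I_n}}) : FF n k :=
  [ffun j : 'I_k => T (@ord0 0, j)].
Definition psi (f : FF n k) : {ffun svt_box_type [:: k] -> {set 'I_n}} :=
  [ffun b : 'I_1 * 'I_k => f b.2].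

Lemma I1 (i : 'I_1) : i = @ord0 0.
Proof. by apply: val_inj; case: i => [[|]]. Qed.

Lemma phi_inj : injective phi.
Proof.
move=> T1 T2 e; apply/ffunP => [[i j]]; rewrite (I1 i).
by have := congr1 (fun h : FF n k => h j) e; rewrite !ffunE.
Qed.

Lemma phi_psi f : phi (psi f) = f.
Proof. by apply/ffunP => j; rewrite !ffunE. Qed.

Lemma svt_valid T : is_svt T = valid n k (phi T).
Proof.
apply/idP/idP.
  move/forallP => H; apply: validI.
  - move=> j; rewrite ltn_ord ffunE; have := H (@ord0 0, j).
    by rewrite /in_diagram /= ltn_ord => /and3P [].
  - by move=> j x _; apply: ltn_ord.
  - move=> j1 j2 x y e; rewrite !ffunE => hx hy.
    have := H (@ord0 0, j1); rewrite /in_diagram /= ltn_ord => /and3P [_ /forallP /(_ (@ord0 0, j2)) /= + _].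
    rewrite e eqxx /= => /forall_inP /(_ x hx) /forall_inP /(_ y hy).
    done.
move=> W; apply/forallP => [[i j]]; rewrite (I1 i) /in_diagram /= ltn_ord.
apply/and3P; split.
- by have := valid_ne j W; rewrite ltn_ord ffunE => <-.
- apply/forallP => [[i' j']] /=; rewrite (I1 i') /=; apply/implyP => /eqP e.
  apply/forall_inP => x hx; apply/forall_inP => y hy.
  by apply: (valid_ch (j1 := j) (j2 := j') W e); rewrite ffunE.
- by apply/forallP => b'; rewrite andbF.
Qed.

Lemma card_SVT : #|SVT [:: k] n| = Cnt n k n k.
Proof.
rewrite /SVT /Cnt -(card_imset [set T | is_svt T] phi_inj).
apply: eq_card => f; apply/imsetP/idP.
  by case=> T; rewrite !inE svt_valid => W ->.
by rewrite inE => W; exists (psi f); rewrite ?inE ?svt_valid phi_psi.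
Qed.
End SV.
Local Open Scope ring_scope.
Lemma poch_recl (R : ringType) (a : R) j : pochhammer a j.+1 = a * pochhammer (a + 1) j.
Proof.
rewrite /pochhammer big_ord_recl /= addr0; congr (_ * _).
by apply: eq_bigr => i _; rewrite /bump /= add1n -natr1 -addrA (addrC 1).
Qed.

Lemma poch_recr (R : ringType) (a : R) j : pochhammer a j.+1 = pochhammer a j * (a + j%:R).
Proof. by rewrite /pochhammer big_ord_recr. Qed.

Lemma poch_nat (c j : nat) : pochhammer (c%:R : rat) j = (\prod_(i < j) (c + i))%:R.
Proof. by rewrite natr_prod; apply: eq_bigr => i _; rewrite natrD. Qed.

Lemma poch_neg (N j : nat) : (j <= N)%N ->
  pochhammer (- (N%:R) : rat) j * (-1) ^+ j = (N ^_ j)%:R.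
Proof.
elim: j => [|j IH] hj; first by rewrite /pochhammer big_ord0 expr0 mulr1 ffactn0.
rewrite poch_recr exprS ffactnSr natrM -IH; last by lia.
rewrite natrB; last by lia.
ring.
Qed.

Lemma term_eq (n' k' j : nat) : (j <= n')%N ->
  hyp2F1_term (k'.+1%:R : rat) (- (n'%:R)) (k'.+2)%:R (-1) j
  = (k'.+1)%:R / (k'.+1 + j)%:R * ('C(n', j))%:R.
Proof.
move=> hj; rewrite /hyp2F1_term.
have e1 : pochhammer (- (n'%:R) : rat) j * (-1) ^+ j = ('C(n', j) * j`!)%:R
  by rewrite poch_neg // bin_ffact.
have e2 : pochhammer (k'.+1%:R : rat) j * (k'.+1 + j)%:R = k'.+1%:R * pochhammer (k'.+2)%:R j.
  by rewrite natrD -poch_recr -[(k'.+2)%:R]natr1 -poch_recl.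
have n1 : pochhammer ((k'.+2)%:R : rat) j != 0.
  by rewrite poch_nat pnatr_eq0 -lt0n prodn_gt0.
have n2 : (j`!)%:R != 0 :> rat by rewrite pnatr_eq0 -lt0n fact_gt0.
have n3 : (k'.+1 + j)%:R != 0 :> rat by rewrite pnatr_eq0.
rewrite natrM in e1.
apply: (mulfI n3); apply: (mulfI n1); apply: (mulfI n2).
transitivity ((pochhammer (k'.+1%:R : rat) j * (k'.+1 + j)%:R) * (pochhammer (- n'%:R) j * (-1) ^+ j)).
  by field; rewrite n1 n2.
rewrite e1 e2; field.
have -> : (1 + k'%:R + j%:R : rat) = (k'.+1 + j)%:R by rewrite natrD -natr1 (addrC _ 1).
exact: n3.
Qed.

Lemma Cnt_T N K m : (m <= N)%N -> forall l, (l < K)%N -> Cnt N K m l.+1 = Tsum m l.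
Proof.
elim: m => [|m IH] hm l hl.
  by rewrite Cnt_0k // ?/Tsum ?big_ord0 //; lia.
elim: l hl => [|l IHl] hl.
  by rewrite (Cnt_rec hm hl) Cnt_k0 IH // ?Trec0 //; lia.
rewrite (Cnt_rec hm hl) IH //; last by lia.
rewrite IHl; last by lia.
by rewrite Trec.
Qed.

Lemma Nid n' k' j : ((k'.+1 + j) * ('C(n'.+1 + k', k' + 1 + j) * 'C(k' + j, j))
   = 'C(n' + k' + 1, k'.+1) * k'.+1 * 'C(n', j))%N.
Proof.
have h1 := mul_bin_diag (n' + k' + 1) (k' + j).
have h2 := mul_bin_diag (n' + k' + 1) k'.
have h3 := binL n' k' j.
rewrite (_ : (n' + k' + 1).-1 = n' + k')%N in h1 h2; last by lia.
rewrite (_ : (n'.+1 + k') = n' + k' + 1)%N; last by lia.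
rewrite (_ : (k' + 1 + j) = (k' + j).+1)%N; last by lia.
rewrite (_ : (k'.+1 + j) = (k' + j).+1)%N; last by lia.
transitivity ((((k'+j).+1 * 'C(n'+k'+1,(k'+j).+1)) * 'C(k'+j,j))%N); first ring.
rewrite -h1. transitivity (((n'+k'+1) * ('C(n'+k',k'+j) * 'C(k'+j,j)))%N); first ring.
rewrite -h3. transitivity ((((n'+k'+1) * 'C(n'+k',k')) * 'C(n',j))%N); first ring.
rewrite h2; ring.
Qed.

Theorem corollary3p3 (n k : nat) (hn : (1 <= n)%N) (hk : (1 <= k)%N) :
  (#|SVT [:: k] n|)%:R =
    ('C(n + k - 1, k))%:R *
      hyp2F1_terminating (k%:R : rat) n.-1 (k.+1)%:R (-1).
Proof.
case: n hn => [//|n'] _; case: k hk => [//|k'] _.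
rewrite card_SVT.
rewrite (Cnt_T (leqnn _) (ltnSn _)) TU /Usum /hyp2F1_terminating.
rewrite (_ : (n'.+1 + k'.+1 - 1) = n' + k' + 1)%N; last by lia.
rewrite natr_sum mulr_sumr; apply: eq_bigr => j _.
change (n'.+1.-1) with n'.
rewrite term_eq; last by have := ltn_ord j; lia.
have n3 : (k'.+1 + j)%:R != 0 :> rat by rewrite pnatr_eq0.
apply: (mulfI n3); rewrite -natrM Nid !natrM.
move: ('C(n' + k' + 1, k'.+1)%:R : rat) ('C(n', j)%:R : rat) => a b.
move: n3; move: ((k'.+1 + j)%:R : rat) => c n3.
field.
exact: n3.
Qed.
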